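(* Let $(M,\rho)$ be a complete metric space, let $f:M\to\mathbb{R}\cup\{+\infty\}$ be proper, lower semicontinuous and bounded below, and let $g:M\to\mathbb{R}$ be continuous with $$|\nabla f|(x)>|\nabla g|(x)\qquad\text{for all }x\in\operatorname{dom} f\setminus 0\operatorname{crit} f.$$ Then for every $x_0\in\operatorname{dom} f$ at least one of the following holds: (a) there exists $\bar x\in 0\operatorname{crit} f$ with $f(x_0)-g(x_0)\ge f(\bar x)-g(\bar x)$; (b) for every sequence of positive numbers $\varepsilon_n\searrow0$ there exists a sequence $(x_n)_{n\ge1}$ with $x_n\in\varepsilon_n\operatorname{crit} f$ for all $n$, which has no convergent subsequence, and which (together with the given $x_0$) satisfies $$\sum_{n=1}^\infty\varepsilon_n\rho(x_n,x_{n-1})<\infty\quad\text{and}\quad f(x_n)-g(x_n)\ge f(x_{n+1})-g(x_{n+1})\ \text{ for all } n\ge0.$$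
   Context: $\operatorname{dom} f:=\{x:f(x)<+\infty\}$. $[t]^+:=\max\{0,t\}$ (with $[f(x)-f(y)]^+:=0$ if $f(y)=+\infty$). For $x\in\operatorname{dom} f$, the local slope is $|\nabla f|(x):=\limsup_{y\to x,\,y\neq x}\frac{[f(x)-f(y)]^+}{\rho(x,y)}\in[0,+\infty]$ (equal to $0$ at isolated points). For $\varepsilon\ge0$, $\varepsilon\operatorname{crit} f:=\{x\in\operatorname{dom} f:\ |\nabla f|(x)\le\varepsilon\}$. *)

(* Defs.v *)
From Stdlib Require Import Reals.
From Coquelicot Require Import Coquelicot.
Open Scope R_scope.

Section MetricDefs.
Context {M : Type} (d : M -> M -> R).

Definition is_metric : Prop :=
  (forall x y, 0 <= d x y) /\
  (forall x y, d x y = 0 <-> x = y) /\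
  (forall x y, d x y = d y x) /\
  (forall x y z, d x z <= d x y + d y z).

Definition mconv (u : nat -> M) (l : M) : Prop :=
  forall e, 0 < e -> exists N, forall n, (N <= n)%nat -> d (u n) l < e.

Definition mcauchy (u : nat -> M) : Prop :=
  forall e, 0 < e -> exists N, forall m n, (N <= m)%nat -> (N <= n)%nat ->
    d (u m) (u n) < e.

Definition mcomplete : Prop :=
  forall u, mcauchy u -> exists l, mconv u l.

Definition dom (f : M -> Rbar) (x : M) : Prop := Rbar_lt (f x) p_infty.

Definition proper_fun (f : M -> Rbar) : Prop :=
  (forall x, f x <> m_infty) /\ (exists x, dom f x).

Definition bounded_below (f : M -> Rbar) : Prop :=
  exists c : R, forall x, Rbar_le (Finite c) (f x).

Definition lsc (f : M -> Rbar) : Prop :=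
  forall x (t : R), Rbar_lt (Finite t) (f x) ->
    exists delta, 0 < delta /\ forall y, d x y < delta -> Rbar_lt (Finite t) (f y).

Definition mcontinuous (g : M -> R) : Prop :=
  forall x e, 0 < e -> exists delta, 0 < delta /\
    forall y, d x y < delta -> Rabs (g y - g x) < e.

(** [a - b]^+ for a = f x (finite when x in dom f), with the convention
    [a - b]^+ := 0 when b = +oo. *)
Definition pos_diff (a b : Rbar) : R :=
  match a, b with
  | Finite a', Finite b' => Rmax 0 (a' - b')
  | _, _ => 0
  end.

(** sup of [f x - f y]^+ / d(x,y) over 0 < d(x,y) < delta (0 added to the
    set, which does not change the limsup since all ratios are >= 0, and
    gives slope 0 at isolated points). *)
Definition slope_ball (f : M -> Rbar) (x : M) (delta : R) : Rbar :=
  Lub_Rbar (fun r => r = 0 \/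
    exists y, 0 < d x y /\ d x y < delta /\ r = pos_diff (f x) (f y) / d x y).

(** local slope |nabla f|(x) = limsup_{y -> x, y <> x} [f x - f y]^+ / d(x,y) *)
Definition slope (f : M -> Rbar) (x : M) : Rbar :=
  Rbar_glb (fun v => exists delta, 0 < delta /\ v = slope_ball f x delta).

Definition crit (eps : R) (f : M -> Rbar) (x : M) : Prop :=
  dom f x /\ Rbar_le (slope f x) (Finite eps).

End MetricDefs.

(* Main.v *)
Require Import Defs.
From Stdlib Require Import Reals Lra Lia Classical ClassicalEpsilon.
From Coquelicot Require Import Coquelicot.
Open Scope R_scope.

Lemma small_inv (a : R) : 0 < a -> exists N : nat, / INR (S N) < a.
Proof.
  intros Ha. destruct (INR_archimed a 1 Ha) as [n Hn]. exists n.
  assert (H0 : 0 < INR (S n)) by (apply lt_0_INR; lia).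
  assert (H1 : INR n <= INR (S n)) by (apply le_INR; lia).
  apply (Rmult_lt_reg_l (INR (S n))); auto.
  rewrite Rinv_r by lra.
  assert (INR n * a <= INR (S n) * a) by (apply Rmult_le_compat_r; lra). lra.
Qed.

Lemma lt_div_mul (c a t : R) : 0 < t -> c < a / t -> c * t < a.
Proof.
  intros Ht H. apply (Rmult_lt_compat_r t) in H; auto.
  unfold Rdiv in H. rewrite Rmult_assoc, Rinv_l in H by lra. lra.
Qed.

Lemma div_lt_mul (c a t : R) : 0 < t -> a / t < c -> a < c * t.
Proof.
  intros Ht H. apply (Rmult_lt_compat_r t) in H; auto.
  unfold Rdiv in H. rewrite Rmult_assoc, Rinv_l in H by lra. lra.
Qed.

Lemma choose_between (a b : Rbar) (e : R) :
  Rbar_lt a b -> Rbar_lt (Finite e) b ->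
  exists c, e < c /\ Rbar_lt a (Finite c) /\ Rbar_lt (Finite c) b.
Proof.
  destruct a as [ra| |]; destruct b as [rb| |]; simpl; intros H1 H2; try tauto.
  - exists ((Rmax e ra + rb) / 2). unfold Rmax; destruct Rle_dec; lra.
  - exists (Rmax e ra + 1). unfold Rmax; destruct Rle_dec; lra.
  - exists ((e + rb) / 2). lra.
  - exists (e + 1). lra.
Qed.

Section Aux.
Context {M : Type} (d : M -> M -> R) (Hm : is_metric d).

Lemma d_nonneg x y : 0 <= d x y. Proof. destruct Hm as [H _]. apply H. Qed.
Lemma d_sym x y : d x y = d y x. Proof. destruct Hm as [_ [_ [H _]]]. apply H. Qed.
Lemma d_tri x y z : d x z <= d x y + d y z. Proof. destruct Hm as [_ [_ [_ H]]]. apply H. Qed.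
Lemma d_eq0 x y : d x y = 0 -> x = y. Proof. destruct Hm as [_ [H _]]. apply H. Qed.
Lemma d_refl x : d x x = 0. Proof. destruct Hm as [_ [H _]]. apply H; reflexivity. Qed.

Lemma slope_glb (F : M -> Rbar) x :
  Rbar_is_glb (fun v => exists delta, 0 < delta /\ v = slope_ball d F x delta) (slope d F x).
Proof. unfold slope, Rbar_glb. destruct (Rbar_ex_glb _) as [l Hl]. exact Hl. Qed.

Lemma slope_lt (F : M -> Rbar) x (c : R) :
  Rbar_lt (slope d F x) (Finite c) ->
  exists delta, 0 < delta /\ forall y, 0 < d x y -> d x y < delta ->
    pos_diff (F x) (F y) / d x y < c.
Proof.
  intros H.
  destruct (classic (exists delta, 0 < delta /\ Rbar_lt (slope_ball d F x delta) (Finite c)))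
    as [[delta [Hd Hlt]] | Hn].
  - exists delta; split; auto. intros y Hy1 Hy2.
    assert (Hub := proj1 (Lub_Rbar_correct (fun r => r = 0 \/
      exists y, 0 < d x y /\ d x y < delta /\ r = pos_diff (F x) (F y) / d x y))).
    assert (Hr := Hub (pos_diff (F x) (F y) / d x y)
      (or_intror (ex_intro _ y (conj Hy1 (conj Hy2 eq_refl))))).
    unfold slope_ball in Hlt.
    exact (Rbar_le_lt_trans _ _ _ Hr Hlt).
  - exfalso. destruct (slope_glb F x) as [_ Hg].
    assert (Hlb : Rbar_le (Finite c) (slope d F x)).
    { apply Hg. intros v [delta [Hd ->]].
      apply Rbar_not_lt_le. intros Hlt. apply Hn. exists delta; auto. }
    exact (Rbar_lt_not_le _ _ H Hlb).
Qed.

Lemma slope_gt (F : M -> Rbar) x (c : R) :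
  0 < c -> Rbar_lt (Finite c) (slope d F x) ->
  forall delta, 0 < delta -> exists y, 0 < d x y /\ d x y < delta /\
    c < pos_diff (F x) (F y) / d x y.
Proof.
  intros Hc H delta Hd.
  destruct (slope_glb F x) as [Hlb _].
  assert (H1 := Hlb _ (ex_intro _ delta (conj Hd eq_refl))).
  assert (H2 := Rbar_lt_le_trans _ _ _ H H1).
  unfold slope_ball in H2.
  destruct (Lub_Rbar_correct (fun r => r = 0 \/
      exists y, 0 < d x y /\ d x y < delta /\ r = pos_diff (F x) (F y) / d x y)) as [_ Hl].
  destruct (classic (exists y, 0 < d x y /\ d x y < delta /\
    c < pos_diff (F x) (F y) / d x y)) as [Hy | Hn]; auto.
  exfalso.
  assert (Hle : Rbar_le (Lub_Rbar (fun r => r = 0 \/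
      exists y, 0 < d x y /\ d x y < delta /\ r = pos_diff (F x) (F y) / d x y)) (Finite c)).
  { apply Hl. intros r [-> | [y [Hy1 [Hy2 ->]]]]; simpl.
    - lra.
    - apply Rnot_lt_le. intros Hlt. apply Hn. exists y; auto. }
  exact (Rbar_lt_not_le _ _ H2 Hle).
Qed.
End Aux.
Section Ekeland.
Context {M : Type} (d : M -> M -> R) (Hm : is_metric d).

Lemma approx_inf (Tz : M -> Prop) (F : M -> R) (c e : R) (z : M) :
  Tz z -> (forall y, Tz y -> c <= F y) -> 0 < e ->
  exists y, Tz y /\ forall w, Tz w -> F y <= F w + e.
Proof.
  intros Hz Hc He.
  set (E := fun r => exists w, Tz w /\ r = - F w).
  assert (Hb : bound E).
  { exists (- c). intros r [w [Hw ->]]. specialize (Hc w Hw). lra. }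
  assert (Hne : exists r, E r) by (exists (- F z); exists z; auto).
  destruct (completeness E Hb Hne) as [m [Hub Hlub]].
  destruct (classic (exists w, Tz w /\ m - e < - F w)) as [[w [Hw Hlt]] | Hn].
  - exists w; split; auto. intros w' Hw'.
    assert (- F w' <= m) by (apply Hub; exists w'; auto). lra.
  - exfalso. assert (m <= m - e); [|lra].
    apply Hlub. intros r [w [Hw ->]].
    apply Rnot_lt_le. intros Hlt. apply Hn. exists w; auto.
Qed.

Lemma ekeland (P : M -> Prop) (F : M -> R) (eps : R) (x : M) :
  mcomplete d ->
  (forall u l, mconv d u l -> (forall n, P (u n)) -> P l) ->
  (forall z, P z -> forall t, t < F z -> exists delta, 0 < delta /\
      forall y, P y -> d z y < delta -> t < F y) ->
  (exists c, forall y, P y -> c <= F y) ->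
  0 < eps -> P x ->
  exists z, P z /\ F z + eps * d z x <= F x /\
    forall y, P y -> F z <= F y + eps * d y z.
Proof.
  intros Hc Hcl Hlsc [c Hbd] He Hx.
  set (T := fun z y => P y /\ F y + eps * d y z <= F z).
  assert (Trefl : forall a, P a -> T a a).
  { intros a Ha; split; auto. rewrite (d_refl d Hm). lra. }
  assert (Ttrans : forall a b y, T a b -> T b y -> T a y).
  { intros a b y [Hb1 Hb2] [Hy1 Hy2]; split; auto.
    assert (H := d_tri d Hm y b a).
    assert (eps * d y a <= eps * (d y b + d b a)) by (apply Rmult_le_compat_l; lra).
    lra. }
  set (step := fun (k : nat) (z : M) => epsilon (inhabits x)
     (fun y => T z y /\ forall w, T z w -> F y <= F w + / INR (S k))).
  assert (Hstep : forall k z, P z -> T z (step k z) /\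
     forall w, T z w -> F (step k z) <= F w + / INR (S k)).
  { intros k z Hz. apply epsilon_spec.
    apply (approx_inf (T z) F c (/ INR (S k)) z); auto.
    - intros y [Hy _]; auto.
    - apply Rinv_0_lt_compat, lt_0_INR; lia. }
  set (zs := fix zs (k : nat) : M := match k with O => x | S k' => step k' (zs k') end).
  assert (HP : forall k, P (zs k)).
  { induction k as [|k IH]; simpl; auto. apply (Hstep k _ IH). }
  assert (F1 : forall k, T (zs k) (zs (S k)) /\
     forall w, T (zs k) w -> F (zs (S k)) <= F w + / INR (S k)).
  { intros k. apply (Hstep k _ (HP k)). }
  assert (F2 : forall k m, (k <= m)%nat -> T (zs k) (zs m)).
  { intros k m Hkm. induction Hkm as [|m Hkm IH]; auto.
    apply (Ttrans _ (zs m)); auto. apply F1. }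
  assert (F3 : forall k y, T (zs (S k)) y -> eps * d y (zs (S k)) <= / INR (S k)).
  { intros k y Hy. destruct (F1 k) as [H1 H2].
    assert (Hy' := Ttrans _ _ _ H1 Hy). specialize (H2 y Hy').
    destruct Hy as [_ Hy]. lra. }
  assert (F4 : forall k y, T (zs (S k)) y -> d y (zs (S k)) <= / INR (S k) / eps).
  { intros k y Hy. specialize (F3 k y Hy).
    apply (Rmult_le_reg_l eps); auto.
    replace (eps * (/ INR (S k) / eps)) with (/ INR (S k)) by (field; repeat split; apply Rgt_not_eq; try lra; apply lt_0_INR; lia). lra. }
  assert (Hcau : mcauchy d zs).
  { intros e0 He0. destruct (small_inv (eps * e0 / 2)) as [N HN].
    { apply Rdiv_lt_0_compat; [apply Rmult_lt_0_compat|]; lra. }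
    exists (S N). intros m n Hm1 Hn1.
    assert (A1 := F4 N _ (F2 _ _ Hm1)). assert (A2 := F4 N _ (F2 _ _ Hn1)).
    assert (A3 := d_tri d Hm (zs m) (zs (S N)) (zs n)).
    rewrite (d_sym d Hm (zs (S N)) (zs n)) in A3.
    assert (/ INR (S N) / eps < e0 / 2).
    { apply (Rmult_lt_reg_l eps); auto.
      replace (eps * (/ INR (S N) / eps)) with (/ INR (S N)) by (field; repeat split; apply Rgt_not_eq; try lra; apply lt_0_INR; lia). lra. }
    lra. }
  destruct (Hc zs Hcau) as [z Hz].
  assert (HPz : P z) by (apply (Hcl zs z); auto).
  assert (HTz : forall k, T (zs k) z).
  { intros k. split; auto.
    apply Rnot_lt_le. intros Hlt.
    set (a := F (zs k) - eps * d z (zs k)).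
    set (t := (a + F z) / 2).
    destruct (Hlsc z HPz t ltac:(unfold t, a; lra)) as [delta [Hd Hdel]].
    destruct (Hz (Rmin delta ((t - a) / eps))) as [N HN].
    { apply Rmin_pos; auto. apply Rdiv_lt_0_compat; unfold t, a; lra. }
    set (m := Nat.max N k).
    assert (HmN : (N <= m)%nat) by lia. assert (Hmk : (k <= m)%nat) by lia.
    specialize (HN m HmN).
    assert (B1 : d (zs m) z < delta) by (eapply Rlt_le_trans; [exact HN | apply Rmin_l]).
    assert (B2 : d (zs m) z < (t - a) / eps) by (eapply Rlt_le_trans; [exact HN | apply Rmin_r]).
    assert (B3 : t < F (zs m)).
    { apply Hdel; auto. rewrite (d_sym d Hm). auto. }
    destruct (F2 _ _ Hmk) as [_ B4].
    assert (B5 := d_tri d Hm z (zs m) (zs k)).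
    rewrite (d_sym d Hm z (zs m)) in B5.
    assert (B6 : eps * d z (zs k) <= eps * (d (zs m) z + d (zs m) (zs k)))
      by (apply Rmult_le_compat_l; lra).
    assert (B7 : eps * d (zs m) z < t - a).
    { apply (Rmult_lt_compat_l eps) in B2; auto.
      replace (eps * ((t - a) / eps)) with (t - a) in B2 by (field; repeat split; apply Rgt_not_eq; try lra; apply lt_0_INR; lia). auto. }
    unfold a in *. lra. }
  exists z. split; auto. split.
  - destruct (HTz O) as [_ H]. exact H.
  - intros y Hy. apply Rnot_lt_le. intros Hlt.
    assert (HTy : T z y) by (split; auto; lra).
    assert (Hdyz : d y z <= 0).
    { apply Rnot_lt_le. intros Hpos.
      destruct (small_inv (d y z / 2 * eps)) as [N HN].
      { apply Rmult_lt_0_compat; lra. }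
      assert (C1 := F4 N y (Ttrans _ _ _ (HTz (S N)) HTy)).
      assert (C2 := F4 N z (HTz (S N))).
      assert (C3 := d_tri d Hm y (zs (S N)) z).
      rewrite (d_sym d Hm (zs (S N)) z) in C3.
      assert (/ INR (S N) / eps < d y z / 2).
      { apply (Rmult_lt_reg_l eps); auto.
        replace (eps * (/ INR (S N) / eps)) with (/ INR (S N)) by (field; repeat split; apply Rgt_not_eq; try lra; apply lt_0_INR; lia).
        replace (eps * (d y z / 2)) with (d y z / 2 * eps) by ring. lra. }
      lra. }
    assert (Heq : y = z) by (apply (d_eq0 d Hm); assert (H := d_nonneg d Hm y z); lra).
    subst y. rewrite (d_refl d Hm) in Hlt. lra.
Qed.
End Ekeland.
Section Main.
Context {M : Type} (d : M -> M -> R) (Hm : is_metric d) (Hcomplete : mcomplete d)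
  (f : M -> Rbar) (g : M -> R)
  (Hproper : proper_fun f) (Hlsc : lsc d f) (Hbdd : bounded_below f)
  (Hg : mcontinuous d g)
  (Hslope : forall x, dom f x -> ~ crit d 0 f x ->
     Rbar_lt (slope d (fun y => Finite (g y)) x) (slope d f x))
  (x0 : M) (Hx0 : dom f x0).

Definition fr (y : M) : R := real (f y).
Definition hh (y : M) : R := fr y - g y.

Lemma fin y : dom f y -> f y = Finite (fr y).
Proof.
  unfold dom, fr. destruct Hproper as [Hn _]. specialize (Hn y).
  destruct (f y); simpl; tauto.
Qed.

Lemma escape z c : dom f z -> 0 < c ->
  Rbar_lt (slope d (fun y => Finite (g y)) z) (Finite c) ->
  Rbar_lt (Finite c) (slope d f z) ->
  exists y, dom f y /\ hh y < hh z /\ c * d z y < fr z - fr y.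
Proof.
  intros Hz Hc Hsg Hsf.
  destruct (slope_lt d _ z c Hsg) as [delta [Hd Hdel]].
  destruct (slope_gt d f z c Hc Hsf delta Hd) as [y [Hy1 [Hy2 Hy3]]].
  specialize (Hdel y Hy1 Hy2). simpl in Hdel.
  apply div_lt_mul in Hdel; auto.
  apply lt_div_mul in Hy3; auto.
  rewrite (fin z Hz) in Hy3.
  assert (Hcd : 0 < c * d z y) by (apply Rmult_lt_0_compat; auto).
  destruct Hproper as [Hn _].
  assert (Hdy : dom f y /\ f y = Finite (fr y)).
  { unfold dom, fr. specialize (Hn y). destruct (f y); simpl in *; try tauto. lra. }
  destruct Hdy as [Hdy Hfy]. rewrite Hfy in Hy3. simpl in Hy3.
  exists y. split; auto.
  unfold Rmax in *. destruct (Rle_dec 0 (fr z - fr y)); [|lra].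
  destruct (Rle_dec 0 (g z - g y)); unfold hh; split; lra.
Qed.

Lemma closed_S (a : R) (u : nat -> M) (l : M) : mconv d u l ->
  (exists N, forall n, (N <= n)%nat -> dom f (u n) /\ hh (u n) <= a) ->
  dom f l /\ hh l <= a.
Proof.
  intros Hu [N HN].
  destruct (classic (Rbar_le (f l) (Finite (a + g l)))) as [Hle | Hnle].
  - destruct Hproper as [Hn _]. specialize (Hn l).
    assert (Hdl : dom f l) by (unfold dom; destruct (f l); simpl in *; tauto).
    split; auto. rewrite (fin l Hdl) in Hle. simpl in Hle. unfold hh. lra.
  - exfalso. apply Rbar_not_le_lt in Hnle.
    destruct (choose_between _ _ (a + g l) Hnle Hnle) as [t [Ht1 [_ Ht2]]].
    destruct (Hlsc l t Ht2) as [d1 [Hd1 Hdel1]].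
    destruct (Hg l (t - a - g l) ltac:(lra)) as [d2 [Hd2 Hdel2]].
    destruct (Hu (Rmin d1 d2) (Rmin_pos _ _ Hd1 Hd2)) as [N' HN'].
    set (n := Nat.max N N').
    specialize (HN n ltac:(unfold n; lia)). specialize (HN' n ltac:(unfold n; lia)).
    rewrite (d_sym d Hm) in HN'.
    assert (B1 := Hdel1 (u n) (Rlt_le_trans _ _ _ HN' (Rmin_l _ _))).
    assert (B2 := Hdel2 (u n) (Rlt_le_trans _ _ _ HN' (Rmin_r _ _))).
    destruct HN as [Hdn Hhn].
    rewrite (fin _ Hdn) in B1. simpl in B1.
    apply Rabs_def2 in B2. unfold hh in Hhn. lra.
Qed.

Section NotA.
Hypothesis Hna : forall y, crit d 0 f y -> hh x0 < hh y.

Definition Q (e : R) (x' z : M) : Prop :=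
  dom f z /\ hh z <= hh x' /\ fr z + e * d z x' <= fr x' /\ crit d e f z /\
  (forall y, dom f y -> hh y <= hh x' -> fr z <= fr y + e * d y z).

Lemma step_ex (e : R) (x' : M) : 0 < e -> dom f x' -> hh x' <= hh x0 ->
  exists z, Q e x' z.
Proof.
  intros He Hdx Hhx.
  destruct (ekeland d Hm (fun y => dom f y /\ hh y <= hh x') fr e x' Hcomplete)
    as [z [[Hdz Hhz] [H1 H2]]]; auto.
  all: try (split; [auto|lra]).
  - intros u l Hu Hn. apply (closed_S _ u l Hu). exists O; auto.
  - intros z [Hdz _] t Ht. destruct (Hlsc z t) as [delta [Hd Hdel]].
    { rewrite (fin z Hdz). exact Ht. }
    exists delta; split; auto. intros y [Hdy _] Hy.
    specialize (Hdel y Hy). rewrite (fin y Hdy) in Hdel. exact Hdel.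
  - destruct Hbdd as [c Hc]. exists c. intros y [Hdy _].
    specialize (Hc y). rewrite (fin y Hdy) in Hc. exact Hc.
  - exists z. unfold Q. split; auto. split; auto. split; auto. split.
    + split; auto. apply Rbar_not_lt_le. intros Hlt.
      assert (Hnc : ~ crit d 0 f z).
      { intros Hc. specialize (Hna z Hc). lra. }
      specialize (Hslope z Hdz Hnc).
      destruct (choose_between _ _ e Hslope Hlt) as [c [Hc1 [Hc2 Hc3]]].
      destruct (escape z c Hdz ltac:(lra) Hc2 Hc3) as [y [Hdy [Hhy Hfy]]].

      assert (Hyx : hh y <= hh x') by lra. specialize (H2 y (conj Hdy Hyx)).
      rewrite (d_sym d Hm y z) in H2.
      assert (e * d z y <= c * d z y)
        by (apply Rmult_le_compat_r; [apply (d_nonneg d Hm)|lra]).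
      lra.
    + intros y Hdy Hhy. apply H2; auto.
Qed.


Lemma seq_part (eps : nat -> R) : (forall k, 0 < eps k) -> is_lim_seq eps 0 ->
     exists x : nat -> M,
       x O = x0 /\
       (forall k, crit d (eps k) f (x (S k))) /\
       (~ exists (phi : nat -> nat) (l : M),
            (forall k, (phi k < phi (S k))%nat) /\ mconv d (fun k => x (S (phi k))) l) /\
       ex_series (fun k => eps k * d (x (S k)) (x k)) /\
       (forall n, Rbar_le (Rbar_plus (f (x (S n))) (Finite (- g (x (S n)))))
                          (Rbar_plus (f (x n)) (Finite (- g (x n))))).
Proof.
  intros Hpos Hlim.
  set (stepf := fun (k : nat) (z : M) => epsilon (inhabits x0) (Q (eps k) z)).
  set (xs := fix xs (k : nat) : M := match k with O => x0 | S k' => stepf k' (xs k') end).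
  assert (Hsp : forall k z, dom f z -> hh z <= hh x0 -> Q (eps k) z (stepf k z)).
  { intros k z Hz Hh. apply epsilon_spec. apply step_ex; auto. }
  assert (Inv : forall k, dom f (xs k) /\ hh (xs k) <= hh x0).
  { induction k as [|k [IH1 IH2]]; simpl.
    - split; auto; lra.
    - destruct (Hsp k _ IH1 IH2) as [A1 [A2 _]]. split; auto. simpl in A2. lra. }
  assert (HQ : forall k, Q (eps k) (xs k) (xs (S k))).
  { intros k. destruct (Inv k). apply Hsp; auto. }
  assert (Hmono : forall n m, (n <= m)%nat -> hh (xs m) <= hh (xs n)).
  { intros n m Hnm. induction Hnm as [|m Hnm IH]; [lra|].
    destruct (HQ m) as [_ [A _]]. lra. }
  destruct Hbdd as [cb Hcb].
  exists xs. split; [reflexivity|]. split.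
  { intros k. apply (HQ k). }
  split; [|split].
  - intros [phi [l [Hphi Hconv]]].
    assert (Hphik : forall k, (k <= phi k)%nat).
    { induction k as [|k IH]; [lia|]. specialize (Hphi k). lia. }
    set (u := fun k => xs (S (phi k))) in *.
    assert (Hl : forall n, dom f l /\ hh l <= hh (xs n)).
    { intros n. apply (closed_S _ u l Hconv). exists n. intros k Hk.
      split; [apply Inv|]. apply Hmono. specialize (Hphik k). lia. }
    assert (Hdl : dom f l) by apply (Hl O).
    assert (Hmin : forall y, dom f y -> hh y <= hh l -> fr l <= fr y).
    { intros y Hdy Hhy. apply Rnot_lt_le. intros Hlt.
      set (gap := fr l - fr y).
      destruct (Hlsc l (fr y + gap / 2)) as [delta [Hd Hdel]].
      { rewrite (fin l Hdl). simpl. unfold gap; lra. }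
      assert (HK : 0 < gap / 2 / (d y l + 1)).
      { apply Rdiv_lt_0_compat; [unfold gap; lra|].
        assert (H := d_nonneg d Hm y l). lra. }
      apply is_lim_seq_spec in Hlim.
      destruct (Hlim (mkposreal _ HK)) as [N1 HN1].
      destruct (Hconv (Rmin delta 1) (Rmin_pos _ _ Hd Rlt_0_1)) as [N2 HN2].
      set (k := Nat.max N1 N2).
      specialize (HN1 (phi k) ltac:(specialize (Hphik k); unfold k in *; lia)).
      specialize (HN2 k ltac:(unfold k; lia)).
      simpl in HN1. rewrite Rminus_0_r in HN1.
      assert (He : 0 < eps (phi k)) by apply Hpos.
      rewrite Rabs_pos_eq in HN1 by lra.
      destruct (HQ (phi k)) as [_ [_ [_ [_ HE]]]].
      assert (Hhy' : hh y <= hh (xs (phi k))) by (destruct (Hl (phi k)); lra).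
      specialize (HE y Hdy Hhy').
      fold (u k) in HE.
      assert (B1 : d (u k) l < delta) by (eapply Rlt_le_trans; [exact HN2|apply Rmin_l]).
      assert (B2 : d (u k) l < 1) by (eapply Rlt_le_trans; [exact HN2|apply Rmin_r]).
      rewrite (d_sym d Hm) in B1.
      specialize (Hdel (u k) B1).
      assert (Hdu : dom f (u k)) by apply Inv.
      rewrite (fin _ Hdu) in Hdel. simpl in Hdel.
      assert (B3 := d_tri d Hm y l (u k)).
      rewrite (d_sym d Hm l (u k)) in B3.
      assert (B4 : eps (phi k) * d y (u k) <= eps (phi k) * (d y l + 1))
        by (apply Rmult_le_compat_l; lra).
      assert (B5 : eps (phi k) * (d y l + 1) < gap / 2 / (d y l + 1) * (d y l + 1))
        by (apply Rmult_lt_compat_r; [assert (H := d_nonneg d Hm y l); lra | exact HN1]).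
      replace (gap / 2 / (d y l + 1) * (d y l + 1)) with (gap / 2) in B5
        by (field; assert (H := d_nonneg d Hm y l); lra).
      lra. }
    assert (Hcl : crit d 0 f l).
    { split; auto. apply Rbar_not_lt_le. intros Hlt.
      assert (Hnc : ~ crit d 0 f l).
      { intros [_ Hc]. exact (Rbar_lt_not_le _ _ Hlt Hc). }
      specialize (Hslope l Hdl Hnc).
      destruct (choose_between _ _ 0 Hslope Hlt) as [c [Hc1 [Hc2 Hc3]]].
      destruct (escape l c Hdl Hc1 Hc2 Hc3) as [y [Hdy [Hhy Hfy]]].
      specialize (Hmin y Hdy ltac:(lra)).
      assert (0 <= c * d l y) by (apply Rmult_le_pos; [lra|apply (d_nonneg d Hm)]).
      lra. }
    specialize (Hna l Hcl). destruct (Hl O) as [_ H]. simpl in H. lra.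
  - set (a := fun k => eps k * d (xs (S k)) (xs k)).
    assert (Hpart : forall n, sum_n a n <= fr x0 - fr (xs (S n))).
    { induction n as [|n IH].
      - rewrite sum_O. destruct (HQ O) as [_ [_ [A _]]]. unfold a. simpl in *. lra.
      - rewrite sum_Sn. destruct (HQ (S n)) as [_ [_ [A _]]].
        change (plus (sum_n a n) (a (S n))) with (sum_n a n + a (S n)).
        unfold a at 2. lra. }
    assert (Hnn : forall k, 0 <= a k).
    { intros k. unfold a. apply Rmult_le_pos; [apply Rlt_le, Hpos|apply (d_nonneg d Hm)]. }
    destruct (ex_finite_lim_seq_incr (sum_n a) (fr x0 - cb)) as [L HL].
    + intros n. rewrite sum_Sn.
      change (plus (sum_n a n) (a (S n))) with (sum_n a n + a (S n)).
      specialize (Hnn (S n)). lra.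
    + intros n. specialize (Hpart n). specialize (Hcb (xs (S n))).
      rewrite (fin _ (proj1 (Inv (S n)))) in Hcb. change (cb <= fr (xs (S n))) in Hcb. lra.
    + exists L. exact HL.
  - intros n. destruct (HQ n) as [A1 [A2 _]].
    rewrite (fin _ A1), (fin _ (proj1 (Inv n))). cbn [Rbar_le Rbar_plus Rbar_plus']. unfold hh in A2. lra.
Qed.
End NotA.
End Main.

Theorem theorem3p5 (M : Type) (d : M -> M -> R)
  (Hmetric : is_metric d) (Hcomplete : mcomplete d)
  (f : M -> Rbar) (g : M -> R)
  (Hproper : proper_fun f) (Hlsc : lsc d f) (Hbdd : bounded_below f)
  (Hg : mcontinuous d g)
  (Hslope : forall x, dom f x -> ~ crit d 0 f x ->
     Rbar_lt (slope d (fun y => Finite (g y)) x) (slope d f x))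
  (x0 : M) (Hx0 : dom f x0) :
  (exists xb, crit d 0 f xb /\
     Rbar_le (Rbar_plus (f xb) (Finite (- g xb)))
             (Rbar_plus (f x0) (Finite (- g x0))))
  \/
  (forall eps : nat -> R,
     (forall k, 0 < eps k) ->
     (forall k, eps (S k) <= eps k) ->
     is_lim_seq eps 0 ->
     exists x : nat -> M,
       x O = x0 /\
       (forall k, crit d (eps k) f (x (S k))) /\
       (~ exists (phi : nat -> nat) (l : M),
            (forall k, (phi k < phi (S k))%nat) /\ mconv d (fun k => x (S (phi k))) l) /\
       ex_series (fun k => eps k * d (x (S k)) (x k)) /\
       (forall n, Rbar_le (Rbar_plus (f (x (S n))) (Finite (- g (x (S n)))))
                          (Rbar_plus (f (x n)) (Finite (- g (x n)))))).
Proof.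
  destruct (classic (exists xb, crit d 0 f xb /\
     Rbar_le (Rbar_plus (f xb) (Finite (- g xb)))
             (Rbar_plus (f x0) (Finite (- g x0))))) as [Ha | Hna].
  - left; exact Ha.
  - right. intros eps Hpos _ Hlim.
    apply (seq_part d Hmetric Hcomplete f g Hproper Hlsc Hbdd Hg Hslope x0 Hx0); auto.
    intros y Hy. apply Rnot_le_lt. intros Hle. apply Hna. exists y. split; auto.
    rewrite (fin f Hproper y (proj1 Hy)), (fin f Hproper x0 Hx0).
    cbn [Rbar_le Rbar_plus Rbar_plus']. unfold hh in Hle. lra.
Qed.
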